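(* Let $q$ be a large prime, $m=o(\log q)$, and $t$ a positive integer with $t^m=o(\sqrt q)$. Let $s_2,\dots,s_{m-1}$ be the elements (other than $0,1$) of a uniformly random evaluation set, i.e. distinct random elements of $\mathbb{F}_q\setminus\{0,1\}$. Define \[A_0=\tfrac{1}{1-s_2}[t]+\cdots+\tfrac{1}{1-s_{m-1}}[t],\qquad A_1=\tfrac{1}{s_2}[t]+\cdots+\tfrac{1}{s_{m-1}}[t].\] Then with high probability (as $q\to\infty$), $|A_0|=\Omega(t^{m-2})$ and $|A_1|=\Omega(t^{m-2})$.
   Context: $[t]=\{1,\dots,t\}$ viewed as a subset of $\mathbb{F}_q$; for $\lambda\in\mathbb{F}_q$, $\lambda[t]=\{\lambda a: a\in[t]\}$; for subsets $A,B$ of an abelian group, $A+B=\{a+b: a\in A,b\in B\}$. *)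

(* Defs.v *)
From HB Require Import structures.
From mathcomp Require Import all_boot all_order all_algebra all_field.
From mathcomp Require Import reals exp Rstruct.
Set Implicit Arguments. Unset Strict Implicit. Unset Printing Implicit Defensive.
Import Order.TTheory GRing.Theory Num.Theory.
Local Open Scope ring_scope.

Notation RR := Rdefinitions.R.

Definition intv (F : finFieldType) (t : nat) : {set F} :=
  [set (i.+1)%:R | i : 'I_t].

Definition dil (F : finFieldType) (l : F) (A : {set F}) : {set F} :=
  [set l * a | a in A].

Definition sumset (F : finFieldType) (A B : {set F}) : {set F} :=
  [set a + b | a in A, b in B].

(* s : 'I_k -> F encodes (s_2, ..., s_{m-1}) with k = m - 2, s i = s_{i+2}. *)
Definition A0set (F : finFieldType) (k t : nat) (s : {ffun 'I_k -> F}) : {set F} :=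
  \big[@sumset F/[set 0]]_(i < k) dil (1 - s i)^-1 (intv F t).

Definition A1set (F : finFieldType) (k t : nat) (s : {ffun 'I_k -> F}) : {set F} :=
  \big[@sumset F/[set 0]]_(i < k) dil (s i)^-1 (intv F t).

Definition eval_tuple (F : finFieldType) (k : nat) (s : {ffun 'I_k -> F}) : bool :=
  injectiveb s && [forall i, (s i != 0) && (s i != 1)].

Definition prob (F : finFieldType) (k : nat) (E : pred {ffun 'I_k -> F}) : RR :=
  (#|[set s : {ffun 'I_k -> F} | eval_tuple s && E s]|%:R / #|[set s : {ffun 'I_k -> F} | eval_tuple s]|%:R).

(* Main.v *)
Require Import Defs.
From HB Require Import structures.
From mathcomp Require Import all_boot all_order all_algebra all_field.
From mathcomp Require Import reals exp Rstruct.
From mathcomp Require Import zify ring lra.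
Import Order.TTheory GRing.Theory Num.Theory.
Local Open Scope ring_scope.
Set Implicit Arguments. Unset Strict Implicit.

Section Comb.
Variables (F : finFieldType) (k : nat).
Definition adm := [set s : {ffun 'I_k -> F} | eval_tuple s].

Lemma fiber_bound (B : {set {ffun 'I_k -> F}}) (j : 'I_k) :
 B \subset adm ->
 (forall s s', s \in B -> s' \in B -> (forall i, i != j -> s i = s' i) -> s = s') ->
 (#|B| * (#|F| - k.+1) <= #|adm|)%N.
Proof.
move=> sBa detB.
pose upd (s : {ffun 'I_k -> F}) (x : F) := [ffun i => if i == j then x else s i].
pose allowed (s : {ffun 'I_k -> F}) :=
  [set x | (x != 0) && (x != 1) && [forall i, (i != j) ==> (s i != x)]].
pose D := [set p : {ffun 'I_k -> F} * F | (p.1 \in B) && (p.2 \in allowed p.1)].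
have step1 : (#|B| * (#|F| - k.+1) <= #|D|)%N.
  have -> : #|D| = (\sum_(s in B) #|allowed s|)%N.
    transitivity (\sum_s \sum_x (if (s \in B) && (x \in allowed s) then 1 else 0))%N.
      rewrite pair_big /= -sum1_card big_mkcond /=; apply: eq_bigr => p _.
      by rewrite inE.
    rewrite [RHS]big_mkcond /=; apply: eq_bigr => s _.
    case: (s \in B) => /=; last by rewrite big1.
    by rewrite -sum1_card [RHS]big_mkcond.
  rewrite -sum_nat_const; apply: leq_sum => s _.
  have hk : (0 < k)%N by apply: leq_ltn_trans (ltn_ord j).
  have sub : ~: allowed s \subset (0 |: (1 |: [set s i | i in [set~ j]])).
    apply/subsetP => x; rewrite !inE.
    case: (eqVneq x 0) => //= _; case: (eqVneq x 1) => //= _.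
    move/forallPn => [i]; rewrite negb_imply negbK => /andP[ij /eqP <-].
    by rewrite (imset_f s) ?inE ?orbT.
  have := subset_leq_card sub.
  have c1 := cardsU1 0 (1 |: [set s i | i in [set~ j]]).
  have c2 := cardsU1 1 [set s i | i in [set~ j]].
  have c3 : (#|[set s i | i in [set~ j]]| <= k.-1)%N.
    by have := leq_imset_card s [set~ j]; rewrite cardsC1 card_ord.
  have cc := cardsC (allowed s).
  have b1 := leq_b1 (0 \notin 1 |: [set s i | i in [set~ j]]).
  have b2 := leq_b1 (1 \notin [set s i | i in [set~ j]]).
  move=> h; rewrite -cc leq_subLR addnC leq_add2r.
  apply: leq_trans h _; rewrite c1 c2.
  by apply: leq_trans (leq_add b1 (leq_add b2 c3)) _; rewrite !add1n prednK.
have step2 : (#|D| <= #|adm|)%N.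
  have inj : {in D &, injective (fun p => upd p.1 p.2)}.
    move=> [s x] [s' x']; rewrite !inE /= => /andP[sB _] /andP[s'B _] e.
    have ex : x = x' by have := congr1 (fun f : {ffun 'I_k -> F} => f j) e; rewrite /= !ffunE eqxx.
    rewrite ex (detB s s') // => i ij.
    by have := congr1 (fun f : {ffun 'I_k -> F} => f i) e; rewrite /= !ffunE (negPf ij).
  rewrite -(card_in_imset inj); apply: subset_leq_card; apply/subsetP => y.
  case/imsetP => [[s x]]; rewrite !inE /= => /andP[sB].
  move=> /andP[/andP[x0 x1] /forallP xo] ->.
  have := subsetP sBa s sB; rewrite !inE => /andP[/injectiveP si /forallP s01].
  apply/andP; split.
    apply/injectiveP => i1 i2; rewrite !ffunE.
    case: (eqVneq i1 j) => [->|n1]; case: (eqVneq i2 j) => [->|n2] //.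
    - by move=> e; have := xo i2; rewrite n2 e eqxx.
    - by move=> e; have := xo i1; rewrite n1 e eqxx.
    - exact: si.
  apply/forallP => i; rewrite ffunE; case: (i == j); first by rewrite x0 x1.
  exact: s01.
exact: leq_trans step1 step2.
Qed.
End Comb.
Section Sums.
Variables (F : finFieldType) (k t : nat).

Definition fv (v : F -> F) (s : {ffun 'I_k -> F}) (a : {ffun 'I_k -> 'I_t}) : F :=
  \sum_i ((a i).+1)%:R * v (s i).

Lemma det_lemma (v : F -> F) (a b : {ffun 'I_k -> 'I_t}) (j : 'I_k) :
  injective v -> ((a j).+1%:R != (b j).+1%:R :> F) ->
  forall s s', fv v s a = fv v s b -> fv v s' a = fv v s' b ->
   (forall i, i != j -> s i = s' i) -> s = s'.
Proof.
move=> vi hj s s' e e' ag.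
have sj : s j = s' j.
  have sp : forall (c : {ffun 'I_k -> 'I_t}) (u : {ffun 'I_k -> F}), fv v u c =
     ((c j).+1)%:R * v (u j) + \sum_(i < k | i != j) ((c i).+1)%:R * v (u i).
    by move=> c u; rewrite /fv (bigD1 j).
  move: e e'; rewrite !sp.
  rewrite [X in _ + X = _ -> _](eq_bigr (fun i => ((a i).+1)%:R * v (s' i))); last by move=> i /ag ->.
  rewrite [X in _ = _ + X -> _](eq_bigr (fun i => ((b i).+1)%:R * v (s' i))); last by move=> i /ag ->.
  set Ra := \sum_(i | _) _; set Rb := \sum_(i | _) _.
  set ca := ((a j).+1)%:R; set cb := ((b j).+1)%:R.
  move=> e e'; apply: vi.
  have hz : ca - cb != 0 by rewrite subr_eq0.
  apply: (mulfI hz).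
  have -> : (ca - cb) * v (s j) = (ca * v (s j) + Ra) - (cb * v (s j) + Ra) by ring.
  have -> : (ca - cb) * v (s' j) = (ca * v (s' j) + Ra) - (cb * v (s' j) + Ra) by ring.
  rewrite e e'; ring.
apply/ffunP => i; case: (eqVneq i j) => [->|]; first exact: sj.
exact: ag.
Qed.

Lemma mem_bigsum (I : Type) (r : seq I) (w : I -> F) (a : I -> nat) :
  (forall i, (a i < t)%N) ->
  \sum_(i <- r) ((a i).+1)%:R * w i \in \big[@sumset F/[set 0]]_(i <- r) dil (w i) (intv F t).
Proof.
move=> ha; elim: r => [|x r IH]; first by rewrite !big_nil inE.
rewrite !big_cons; apply/imset2P; exists (((a x).+1)%:R * w x) (\sum_(j <- r) ((a j).+1)%:R * w j) => //.
  apply/imsetP; exists ((a x).+1)%:R; last by rewrite mulrC.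
  by apply/imsetP; exists (Ordinal (ha x)).
Qed.

Lemma card_lb (v : F -> F) (s : {ffun 'I_k -> F}) :
  injective (fv v s) ->
  (t ^ k <= #|\big[@sumset F/[set 0%R]]_(i < k) dil (v (s i)) (intv F t)|)%N.
Proof.
move=> inj.
have -> : (t ^ k = #|[set fv v s a | a in [set: {ffun 'I_k -> 'I_t}]]|)%N.
  by rewrite card_imset // cardsT card_ffun !card_ord.
apply: subset_leq_card; apply/subsetP => y /imsetP [a _ ->].
rewrite /fv; apply: (@mem_bigsum _ _ (fun i => v (s i)) (fun i => a i)) => i; exact: ltn_ord.
Qed.
End Sums.

Section Bad.
Variables (F : finFieldType) (k t : nat).

Lemma bad_bound (v : F -> F) : injective v ->
  (forall x y : 'I_t, x != y -> ((x.+1)%:R != (y.+1)%:R :> F)) ->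
  (#|[set s in adm F k | ~~ injectiveb (@fv F k t v s)]| * (#|F| - k.+1)
     <= (t ^ k * t ^ k) * #|adm F k|)%N.
Proof.
move=> vi hc.
pose Bp (p : {ffun 'I_k -> 'I_t} * {ffun 'I_k -> 'I_t}) :=
  [set s in adm F k | fv v s p.1 == fv v s p.2].
have h1 : (#|[set s in adm F k | ~~ injectiveb (@fv F k t v s)]|
           <= \sum_(p | p.1 != p.2) #|Bp p|)%N.
  rewrite -sum1_card.
  apply: (@leq_trans (\sum_(s in [set s in adm F k | ~~ injectiveb (@fv F k t v s)])
            \sum_(p | p.1 != p.2) (s \in Bp p))%N).
    apply: leq_sum => s; rewrite inE => /andP[sa /injectivePn [a [b ab e]]].
    rewrite (bigD1 (a, b)) //= inE sa /= e eqxx.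
    exact: leq_addr.
  rewrite exchange_big /=; apply: leq_sum => p _.
  rewrite -sum1_card [X in (_ <= X)%N]big_mkcond /= [X in (X <= _)%N]big_mkcond /=.
  apply: leq_sum => s _; rewrite !inE.
  by case: (eval_tuple s); case: injectiveb; case: (fv v s p.1 == fv v s p.2).
apply: leq_trans (leq_mul h1 (leqnn _)) _.
rewrite big_distrl /=.
apply: (@leq_trans (\sum_(p | p.1 != p.2) #|adm F k|)%N).
  apply: leq_sum => p neq.
  have [j hj] : exists j, p.1 j != p.2 j.
    apply/existsP; rewrite -negb_forall; apply: contra neq => /forallP h.
    by apply/eqP/ffunP => i; apply/eqP/h.
  apply: (fiber_bound (j := j)).
    by apply/subsetP => s; rewrite inE => /andP[].
  move=> s s'; rewrite !inE => /andP[_ /eqP e] /andP[_ /eqP e'].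
  exact: (det_lemma vi (hc _ _ hj) e e').
apply: (@leq_trans (\sum_p #|adm F k|)%N).
  rewrite [X in (X <= _)%N]big_mkcond /=; apply: leq_sum => p _; by case: ifP.
by rewrite sum_nat_const cardT -cardE card_prod card_ffun card_ord card_ord.
Qed.
End Bad.

Lemma natF_neq (q : nat) (pq : prime q) (a b : nat) :
  (a < b)%N -> (b - a < q)%N -> ((a%:R : 'F_q) != b%:R).
Proof.
move=> ab bq.
have h : ((b - a)%:R : 'F_q) != 0.
  rewrite -(dvdn_pcharf (pchar_Fp pq)); apply/negP => /(dvdn_leq _).
  by rewrite subn_gt0 ab => /(_ isT); rewrite leqNgt bq.
apply: contra h => /eqP e.
by rewrite (natrB _ (ltnW ab)) e subrr.
Qed.

Lemma adm_pos (q k : nat) (pq : prime q) : (k.+2 <= q)%N -> (0 < #|adm 'F_q k|)%N.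
Proof.
move=> kq; apply/card_gt0P.
exists [ffun i : 'I_k => ((i : nat).+2)%:R : 'F_q].
rewrite inE; apply/andP; split.
  apply/injectiveP => i j; rewrite !ffunE => e; apply/val_inj => /=.
  case: (ltngtP i j) => // ij; exfalso.
  - move: e; apply/eqP; apply: natF_neq => //.
    have := ltn_ord j; have := ltn_ord i; lia.
  - move: e; apply/eqP; rewrite eq_sym; apply: natF_neq => //.
    have := ltn_ord j; have := ltn_ord i; lia.
have z : (0%:R : 'F_q) = 0 := mulr0n 1.
have o : (1%:R : 'F_q) = 1 := mulr1n 1.
apply/forallP => i; rewrite ffunE; apply/andP; split.
  rewrite eq_sym -z; apply: natF_neq => //.
  have := ltn_ord i; lia.
rewrite eq_sym -o; apply: natF_neq => //.
have := ltn_ord i; lia.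
Qed.

Lemma count_main (q k T : nat) (pq : prime q) : (T <= q)%N ->
  exists B : nat,
  (#|adm 'F_q k| <= #|[set s : {ffun 'I_k -> 'F_q} | eval_tuple s &&
        (((1 : RR) * ((T ^ k)%N)%:R <= #|A0set T s|%:R)%R &&
        ((1 : RR) * ((T ^ k)%N)%:R <= #|A1set T s|%:R)%R)]| + B)%N /\
  (B * (#|'F_q| - k.+1) <= 2 * (T ^ k * T ^ k) * #|adm 'F_q k|)%N.
Proof.
move=> Tq.
have hc : forall x y : 'I_T, x != y -> (((x : nat).+1)%:R != ((y : nat).+1)%:R :> 'F_q).
  move=> [x xT] [y yT]; rewrite neq_ltn /= => /orP[] xy.
  - by apply: natF_neq => //; lia.
  - by rewrite eq_sym; apply: natF_neq => //; lia.
have inj0 : injective (fun x : 'F_q => (1 - x)^-1).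
  by move=> x y /invr_inj /addrI /oppr_inj.
have B1 := bad_bound k (t:=T) (@invr_inj _) hc.
have B0 := bad_bound k (t:=T) inj0 hc.
set S1 := [set s in adm 'F_q k | ~~ injectiveb (fv GRing.inv s)] in B1.
set S0 := [set s in adm 'F_q k | ~~ injectiveb (fv (fun x : 'F_q => (1 - x)^-1) s)] in B0.
exists (#|S1| + #|S0|)%N; split; last first.
  rewrite card_Fp // in B1 B0 *; have := leq_add B1 B0; rewrite -mulnDl; set X := (T ^ k * T ^ k)%N; set A := #|adm _ _|. by rewrite -mulnA mul2n -addnn mulnDl.
set G := [set s | _].
apply: leq_trans (_ : #|G :|: (S1 :|: S0)| <= _)%N.
  apply: subset_leq_card; apply/subsetP => s sa.
  rewrite !inE; rewrite inE in sa; rewrite sa /=.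
  case i1: (injectiveb (fv (t:=T) GRing.inv s)); case i0: (injectiveb (fv (t:=T) (fun x : 'F_q => (1 - x)^-1) s)); rewrite ?orbT //=.
  rewrite !mul1r !ler_nat.
  by rewrite (card_lb (injectiveP _ i0)) (card_lb (injectiveP _ i1)).
rewrite cardsU; apply: leq_trans (leq_subr _ _) _; rewrite leq_add2l cardsU; exact: leq_subr.
Qed.

Lemma real_d (eps : RR) : 0 < eps ->
  let d := eps / (4 + 4 * eps) in 0 < d /\ d ^+ 2 <= 1 /\ d ^+ 2 <= eps / 16.
Proof.
move=> he d.
have hden : (0 : RR) < 4 + 4 * eps by lra.
have hd0 : 0 < d by rewrite /d divr_gt0.
have hd1 : d * (4 + 4 * eps) = eps by rewrite /d divfK // gt_eqF.
clearbody d.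
have hd2 : d <= 1/4 by nra.
have hd3 : d <= eps / 4 by nra.
by split => //; rewrite expr2; split; nra.
Qed.

Lemma real_final (eps a g b Q X qq d : RR) : 0 < eps -> 0 < a -> a <= g + b ->
  b * Q <= 2 * X * a -> X <= d ^+ 2 * qq -> d ^+ 2 <= eps / 16 ->
  3/4 * qq <= Q -> 1 <= qq -> 1 - eps <= g / a.
Proof.
move=> he ha cov hb hX hd hQ hq.
have Qpos : 0 < Q by lra.
have h1 : d ^+ 2 * qq <= (eps * qq) / 16.
  have -> : (eps * qq) / 16 = eps / 16 * qq by ring.
  by apply: ler_wpM2r => //; lra.
have h2 : (eps * qq) * (3/4) <= eps * Q.
  have -> : (eps * qq) * (3/4) = eps * (3/4 * qq) by ring.
  by apply: ler_wpM2l => //; lra.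
have h0 : 0 <= eps * qq by apply: mulr_ge0; lra.
have key : 2 * X <= eps * Q by lra.
have h3 : 2 * X * a <= eps * Q * a by apply: ler_wpM2r => //; lra.
have bR : b <= eps * a.
  rewrite -(ler_pM2r Qpos); apply: le_trans hb _.
  by apply: le_trans h3 _; rewrite mulrAC.
rewrite ler_pdivlMr //; lra.
Qed.

Lemma lnq_le (q : nat) : (1 <= q)%N -> ln (q%:R : RR) <= q%:R - 1.
Proof.
move=> q1; have q1R : (1 : RR) <= q%:R by rewrite ler1n.
have := @le_ln1Dx RR (q%:R - 1) ltac:(lra); by rewrite addrC subrK.
Qed.

Theorem mainTheorem8 (m t : nat -> nat) :
  (forall q, (2 <= m q)%N) ->
  (forall q, (0 < t q)%N) ->
  (forall eps : RR, 0 < eps -> exists N : nat, forall q : nat,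
      prime q -> (N <= q)%N -> (m q)%:R <= eps * ln (q%:R : RR)) ->
  (forall eps : RR, 0 < eps -> exists N : nat, forall q : nat,
      prime q -> (N <= q)%N -> ((t q ^ m q)%N)%:R <= eps * Num.sqrt (q%:R : RR)) ->
  exists c : RR, 0 < c /\
    forall eps : RR, 0 < eps -> exists N : nat, forall q : nat,
      prime q -> (N <= q)%N ->
      1 - eps <= prob (fun s : {ffun 'I_(m q - 2) -> 'F_q} =>
        (c * ((t q ^ (m q - 2))%N)%:R <= #|A0set (t q) s|%:R) &&
        (c * ((t q ^ (m q - 2))%N)%:R <= #|A1set (t q) s|%:R)).
Proof.
move=> hm2 ht0 hlog hsq.
exists 1; split; first exact: ltr01.
move=> eps he.
have [hd0 [hd1 hd2]] := real_d he.
move: hd0 hd1 hd2; set d := eps / _ => hd0 hd1 hd2.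
have [N1 hN1] := hsq d hd0.
have [N2 hN2] := hlog (1/4) (ltac:(lra)).
exists (maxn N1 N2) => q pq hq.
have h1 := hN1 q pq (leq_trans (leq_maxl _ _) hq).
have h2 := hN2 q pq (leq_trans (leq_maxr _ _) hq).
clear hN1 hN2 hlog hsq.
have q1 : (1 < q)%N := prime_gt1 pq.
have q1R : (1 : RR) <= q%:R by rewrite ler1n ltnW.
have lnq := lnq_le (ltnW q1).
have m4 : (4 * m q < q)%N.
  rewrite -(ltr_nat RR) natrM; clear -h2 lnq q1R; lra.
set M := m q in hm2 m4 h1 h2 *; set T := t q in h1 *.
have hT := ht0 q; rewrite -/T in hT.
have hM := hm2 q; rewrite -/M in hM.
clear h2 lnq hm2 ht0.
have sq := @sqr_sqrtr RR (q%:R) (ler0n _ _).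
have Tsq : ((T ^ M * T ^ M)%N%:R : RR) <= d ^+ 2 * q%:R.
  rewrite natrM -sq -exprMn expr2.
  by apply: ler_pM => //; apply: ler0n.
clear h1 sq.
have TkTk : (T ^ (M - 2) * T ^ (M - 2) <= T ^ M * T ^ M)%N.
  by apply: leq_mul; apply: leq_pexp2l => //; apply: leq_subr.
have Tq : (T <= q)%N.
  have : (T <= T ^ M * T ^ M)%N.
    have e1 : (T <= T ^ M)%N by rewrite -{1}(expn1 T); apply: leq_pexp2l => //; lia.
    have e2 : (0 < T ^ M)%N by rewrite expn_gt0 hT.
    exact: leq_trans e1 (leq_pmulr _ e2).
  rewrite -(ler_nat RR) => hh; rewrite -(ler_nat RR).
  have : d ^+ 2 * q%:R <= 1 * q%:R by apply: ler_wpM2r => //; apply: ler0n.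
  clear -hh Tsq; lra.
have kq : ((M - 2).+2 <= q)%N by clear -m4 hM; lia.
have k1q : (4 * (M - 2).+1 <= q)%N by clear -m4 hM; lia.
have [B [cov bnd]] := count_main (M - 2) pq Tq.
have apos := adm_pos pq kq.
rewrite card_Fp // in bnd.
rewrite /prob -/(adm 'F_q (M - 2)).
set A := #|adm _ _| in cov bnd apos *.
set G := #|_| in cov *.
apply: (@real_final eps A%:R G%:R B%:R (q - (M - 2).+1)%N%:R (T ^ (M - 2) * T ^ (M - 2))%N%:R q%:R d) => //.
- by rewrite ltr0n.
- by rewrite -natrD ler_nat.
- by rewrite -!natrM ler_nat.
- by apply: le_trans Tsq; rewrite ler_nat.
- rewrite natrB; last by clear -k1q; lia.
  have : ((4 * (M - 2).+1)%N%:R : RR) <= q%:R by rewrite ler_nat.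
  rewrite natrM; clear; lra.
Qed.
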